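(* Let $W$ and $V$ be binary-input channels such that $V$ is less noisy than $W$. Then for every $n\ge1$ and every $\mathbf{s}\in\{-,+\}^n$, $V^{\mathbf{s}}$ is less noisy than $W^{\mathbf{s}}$; in particular $I(W^{\mathbf{s}})\le I(V^{\mathbf{s}})$.
   Context: A binary-input channel $W\colon\{0,1\}\to\mathcal{Y}$ is a family of transition probabilities $W(y\mid x)$ on a discrete output alphabet; its symmetric capacity $I(W)$ is the mutual information (in bits) between a uniform input in $\{0,1\}$ and the output. A channel $V$ is less noisy than a channel $W$ with the same input alphabet if $I(T;Y)\le I(T;Z)$ for every joint distribution of the form $p(t,x,y,z)=p(x,t)W(y\mid x)V(z\mid x)$. For a binary-input channel $W$, define $W^-(y_1,y_2\mid u_1)=\sum_{u_2\in\{0,1\}}\tfrac12 W(y_1\mid u_1+u_2)W(y_2\mid u_2)$ and $W^+(y_1,y_2,u_1\mid u_2)=\tfrac12 W(y_1\mid u_1+u_2)W(y_2\mid u_2)$ (addition mod 2), and recursively $W^{s_1\cdots s_n}=(W^{s_1\cdots s_{n-1}})^{s_n}$ for $\mathbf{s}=(s_1,\dots,s_n)\in\{-,+\}^n$. *)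

(* Defs.v *)
From mathcomp Require Import all_boot.
From Stdlib Require Import Reals.
Set Implicit Arguments. Unset Strict Implicit. Unset Printing Implicit Defensive.

Local Open Scope R_scope.

Notation "\rsum_ ( i : T ) F" := (\big[Rplus/0%R]_(i : T) F)
  (at level 41, F at level 41, i, T at level 50) : R_scope.

(* A binary-input channel with output alphabet Y: W x y = W(y | x). *)
Definition chan (Y : finType) := bool -> Y -> R.

Definition is_channel (Y : finType) (W : chan Y) : Prop :=
  (forall x y, 0 <= W x y) /\ (forall x, \rsum_(y : Y) W x y = 1).

Definition log2 (x : R) : R := ln x / ln 2.

Definition margA (A B : finType) (p : A -> B -> R) (a : A) : R :=
  \rsum_(b : B) p a b.
Definition margB (A B : finType) (p : A -> B -> R) (b : B) : R :=
  \rsum_(a : A) p a b.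
Definition mutinfo (A B : finType) (p : A -> B -> R) : R :=
  \rsum_(a : A) \rsum_(b : B)
    (if Rlt_dec 0 (p a b)
     then p a b * log2 (p a b / (margA p a * margB p b))
     else 0).

Definition symcap (Y : finType) (W : chan Y) : R :=
  mutinfo (fun (x : bool) (y : Y) => / 2 * W x y).

Definition is_dist2 (T : finType) (p : bool -> T -> R) : Prop :=
  (forall x t, 0 <= p x t) /\ \rsum_(x : bool) \rsum_(t : T) p x t = 1.

Definition less_noisy (Z Y : finType) (V : chan Z) (W : chan Y) : Prop :=
  forall (T : finType) (p : bool -> T -> R), is_dist2 p ->
    mutinfo (fun (t : T) (y : Y) => \rsum_(x : bool) p x t * W x y)
    <= mutinfo (fun (t : T) (z : Z) => \rsum_(x : bool) p x t * V x z).

Definition minus_chan (Y : finType) (W : chan Y) : chan (Y * Y)%type :=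
  fun u1 y => \rsum_(u2 : bool) / 2 * W (addb u1 u2) y.1 * W u2 y.2.

Definition plus_chan (Y : finType) (W : chan Y) : chan (Y * Y * bool)%type :=
  fun u2 y => / 2 * W (addb y.2 u2) y.1.1 * W u2 y.1.2.

(* sign encoding: true = '+', false = '-' *)
Definition outT1 (Y : finType) (b : bool) : finType :=
  if b then ((Y * Y * bool)%type : finType) else ((Y * Y)%type : finType).

Definition polar1 (Y : finType) (b : bool) (W : chan Y) : chan (outT1 Y b) :=
  if b as b' return chan (outT1 Y b') then plus_chan W else minus_chan W.

(* W^{s_1 ... s_n} = (W^{s_1 ... s_{n-1}})^{s_n}: s_1 is applied first. *)
Fixpoint outT (Y : finType) (s : seq bool) : finType :=
  match s with
  | [::] => Y
  | b :: s' => outT (outT1 Y b) s'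
  end.

Fixpoint polar (Y : finType) (s : seq bool) : chan Y -> chan (outT Y s) :=
  match s as s' return chan Y -> chan (outT Y s') with
  | [::] => fun W => W
  | b :: s' => fun W => @polar (outT1 Y b) s' (@polar1 Y b W)
  end.

Arguments polar1 {Y} b W _ _.
Arguments polar {Y} s W _ _.

(* Main.v *)
Require Import Defs.
From HB Require Import structures.
From mathcomp Require Import all_boot.
From Stdlib Require Import Reals Lra FunctionalExtensionality.
Set Implicit Arguments. Unset Strict Implicit. Unset Printing Implicit Defensive.
Local Open Scope R_scope.

HB.instance Definition _ := Monoid.isComLaw.Build R 0 Rplus (fun x y z => esym (Rplus_assoc x y z)) Rplus_comm Rplus_0_l.
HB.instance Definition _ := Monoid.isComLaw.Build R 1 Rmult (fun x y z => esym (Rmult_assoc x y z)) Rmult_comm Rmult_1_l.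
Lemma Rmult_0_l' : left_zero 0 Rmult. Proof. move=> x; ring. Qed.
Lemma Rmult_0_r' : right_zero 0 Rmult. Proof. move=> x; ring. Qed.
HB.instance Definition _ := Monoid.isMulLaw.Build R 0 Rmult Rmult_0_l' Rmult_0_r'.
Lemma Rdl : left_distributive Rmult Rplus. Proof. move=> x y z; ring. Qed.
Lemma Rdr : right_distributive Rmult Rplus. Proof. move=> x y z; ring. Qed.
HB.instance Definition _ := Monoid.isAddLaw.Build R Rmult Rplus Rdl Rdr.

Lemma rsum_ge0 (I : finType) (F : I -> R) : (forall i, 0 <= F i) -> 0 <= \rsum_(i : I) F i.
Proof. move=> h; apply: big_ind => //; [lra | move=> x y; lra]. Qed.

Lemma rsum_le (I : finType) (F G : I -> R) : (forall i, F i <= G i) ->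
  \rsum_(i : I) F i <= \rsum_(i : I) G i.
Proof. move=> h; apply: big_ind2 => //; [lra | move=> *; lra]. Qed.

Lemma rsum_term (I : finType) (F : I -> R) j : (forall i, 0 <= F i) -> F j <= \rsum_(i : I) F i.
Proof.
move=> h; rewrite (bigD1 j) //=.
have : 0 <= \big[Rplus/0]_(i | i != j) F i by apply: big_ind => //; [lra | move=> x y; lra].
lra.
Qed.

Lemma rsum_sub (I : finType) (F G : I -> R) :
  \rsum_(i : I) (F i - G i) = \rsum_(i : I) F i - \rsum_(i : I) G i.
Proof.
have -> : \rsum_(i : I) (F i - G i) = \rsum_(i : I) (F i + (-1) * G i).
  by apply: eq_bigr => i _; ring.
rewrite big_split /= -big_distrr /=; ring.
Qed.

Lemma rsum_pair (A B : finType) (F : A * B -> R) :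
  \rsum_(o : A * B) F o = \rsum_(a : A) \rsum_(b : B) F (a, b).
Proof. by rewrite pair_bigA; apply: eq_bigr => -[a b] _. Qed.

Lemma rsum_prod (A B : finType) (f : A -> R) (g : B -> R) :
  \rsum_(o : A * B) (f o.1 * g o.2) = (\rsum_(a : A) f a) * (\rsum_(b : B) g b).
Proof.
rewrite rsum_pair big_distrl; apply: eq_bigr => a _ /=.
by rewrite big_distrr.
Qed.

Lemma rsum_reindex (O O' : finType) (f : O' -> O) (G : O -> R) :
  bijective f -> \rsum_(o : O) G o = \rsum_(o : O') G (f o).
Proof. move=> hf; rewrite (reindex f) //; exact: onW_bij. Qed.

Lemma rsum0 (I : finType) : \rsum_(i : I) 0 = 0.
Proof. by rewrite big1. Qed.

Lemma rsum_scale (I : finType) c (F : I -> R) :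
  \rsum_(i : I) (c * F i) = c * \rsum_(i : I) F i.
Proof. by rewrite big_distrr. Qed.

Lemma rsum_scale_r (I : finType) c (F : I -> R) :
  (\rsum_(i : I) F i) * c = \rsum_(i : I) (F i * c).
Proof. by rewrite big_distrl. Qed.

Lemma rsum_bool (F : bool -> R) : \rsum_(b : bool) F b = F true + F false.
Proof. by rewrite big_bool. Qed.

Definition phi (x : R) : R := x * ln x.

Definition K (T O : finType) (q : T -> O -> R) : R :=
  (\rsum_(t : T) \rsum_(o : O) phi (q t o)) - (\rsum_(t : T) phi (\rsum_(o : O) q t o))
  - (\rsum_(o : O) phi (\rsum_(t : T) q t o)) + phi (\rsum_(t : T) \rsum_(o : O) q t o).
Arguments K {T O} q.

Lemma rsum_comb (I : finType) (a c d e : I -> R) :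
  \rsum_(i : I) (a i - c i - d i + e i) =
  \rsum_(i : I) a i - \rsum_(i : I) c i - \rsum_(i : I) d i + \rsum_(i : I) e i.
Proof. by rewrite big_split /= !rsum_sub. Qed.

Lemma K_chain (T B Y : finType) (q : T -> B * Y -> R) :
  K q = K (fun t b => \rsum_(y : Y) q t (b, y)) + \rsum_(b : B) K (fun t y => q t (b, y)).
Proof.
rewrite /K rsum_comb.
under eq_bigr => t _ do rewrite rsum_pair.
under [X in _ - X - _ + _ = _]eq_bigr => t _ do rewrite rsum_pair.
rewrite rsum_pair.
have e1 : \rsum_(t : T) \rsum_(o : B * Y) q t o = \rsum_(t : T) \rsum_(b : B) \rsum_(y : Y) q t (b, y).
  by apply: eq_bigr => t _; rewrite rsum_pair.
have e2 : \rsum_(b : B) \rsum_(t : T) \rsum_(y : Y) phi (q t (b, y)) = \rsum_(t : T) \rsum_(b : B) \rsum_(y : Y) phi (q t (b, y)).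
  by rewrite exchange_big.
have e3 : \rsum_(b : B) \rsum_(t : T) phi (\rsum_(y : Y) q t (b, y)) = \rsum_(t : T) \rsum_(b : B) phi (\rsum_(y : Y) q t (b, y)).
  by rewrite exchange_big.
rewrite e1 e2 e3; ring.
Qed.

Lemma K_reindex (T O O' : finType) (f : O' -> O) (q : T -> O -> R) :
  bijective f -> K q = K (fun t o => q t (f o)).
Proof.
move=> hf; rewrite /K.
rewrite (rsum_reindex (fun o => phi (\rsum_(t : T) q t o)) hf).
have e1 : forall t, \rsum_(o : O) q t o = \rsum_(o : O') q t (f o).
  by move=> t; exact: rsum_reindex.
have e2 : forall t, \rsum_(o : O) phi (q t o) = \rsum_(o : O') phi (q t (f o)).
  by move=> t; exact: (rsum_reindex (fun o => phi (q t o))).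
have E2 : \rsum_(t : T) \rsum_(o : O) phi (q t o) = \rsum_(t : T) \rsum_(o : O') phi (q t (f o)).
  by apply: eq_bigr => t _; apply: e2.
have E1 : \rsum_(t : T) phi (\rsum_(o : O) q t o) = \rsum_(t : T) phi (\rsum_(o : O') q t (f o)).
  by apply: eq_bigr => t _; rewrite e1.
have E3 : \rsum_(t : T) \rsum_(o : O) q t o = \rsum_(t : T) \rsum_(o : O') q t (f o).
  by apply: eq_bigr => t _; rewrite e1.
by rewrite E2 E1 E3.
Qed.

Lemma phi_scale c x : 0 < c -> 0 <= x -> phi (c * x) = c * phi x + c * ln c * x.
Proof.
move=> hc hx; rewrite /phi.
case: (Rle_lt_or_eq_dec 0 x hx) => h.
- rewrite ln_mult //; ring.
- rewrite -h; ring.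
Qed.

Lemma rsum_phi_scale (I : finType) c (F : I -> R) : 0 < c -> (forall i, 0 <= F i) ->
  \rsum_(i : I) phi (c * F i) = c * (\rsum_(i : I) phi (F i)) + c * ln c * (\rsum_(i : I) F i).
Proof.
move=> hc hF.
under eq_bigr => i _ do rewrite (phi_scale hc (hF i)).
by rewrite big_split /= -!big_distrr.
Qed.

Lemma K_scale (T O : finType) c (q : T -> O -> R) : 0 < c -> (forall t o, 0 <= q t o) ->
  K (fun t o => c * q t o) = c * K q.
Proof.
move=> hc hq; rewrite /K.
under eq_bigr => t _ do rewrite rsum_phi_scale //.
under [X in _ - X - _ + _ = _]eq_bigr => t _ do rewrite rsum_scale.
under [X in _ - _ - X + _ = _]eq_bigr => o _ do rewrite rsum_scale.
under [X in _ - _ - _ + phi X = _]eq_bigr => t _ do rewrite rsum_scale.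
rewrite rsum_scale.
have h1 : forall t, 0 <= \rsum_(o : O) q t o by move=> t; apply: rsum_ge0.
have h2 : forall o, 0 <= \rsum_(t : T) q t o by move=> o; apply: rsum_ge0.
have h3 : 0 <= \rsum_(t : T) \rsum_(o : O) q t o by apply: rsum_ge0.
have ex : \rsum_(o : O) \rsum_(t : T) q t o = \rsum_(t : T) \rsum_(o : O) q t o by rewrite exchange_big.
rewrite !rsum_phi_scale // phi_scale // big_split /= !rsum_scale ex.
ring.
Qed.

Lemma K_zero (T O : finType) : K (fun (t : T) (o : O) => 0) = 0.
Proof.
have p0 : phi 0 = 0 by rewrite /phi; ring.
rewrite /K; rewrite ?rsum0 ?p0 ?rsum0 ?p0 ?rsum0 ?p0 ?rsum0; ring.
Qed.

Lemma ln2_pos : 0 < ln 2.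
Proof. rewrite -ln_1; apply: ln_increasing; lra. Qed.

Lemma mutinfo_K (A B : finType) (q : A -> B -> R) :
  (forall a b, 0 <= q a b) -> \rsum_(a : A) \rsum_(b : B) q a b = 1 ->
  mutinfo q = K q / ln 2.
Proof.
move=> hq h1.
have l2 := ln2_pos.
suff : mutinfo q * ln 2 = K q by move=> <-; field; lra.
have term : forall a b,
  (if Rlt_dec 0 (q a b) then q a b * log2 (q a b / (margA q a * margB q b)) else 0) * ln 2
  = phi (q a b) - q a b * ln (margA q a) - q a b * ln (margB q b).
  move=> a b; case: Rlt_dec => h /=.
  - have hA : 0 < margA q a.
      have := @rsum_term B (q a) b (hq a); rewrite /margA; lra.
    have hB : 0 < margB q b.
      have := @rsum_term A (fun a => q a b) a (fun a => hq a b); rewrite /margB /=; lra.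
    have hAB : 0 < margA q a * margB q b by apply: Rmult_lt_0_compat.
    rewrite /log2 /phi /Rdiv (ln_mult _ _ h (Rinv_0_lt_compat _ hAB)) (ln_Rinv _ hAB) (ln_mult _ _ hA hB).
    field; lra.
  - have -> : q a b = 0 by have := hq a b; lra.
    rewrite /phi; ring.
rewrite /mutinfo rsum_scale_r.
under eq_bigr => a _ do rewrite rsum_scale_r.
under eq_bigr => a _ do under eq_bigr => b _ do rewrite term.
under eq_bigr => a _ do rewrite !rsum_sub.
rewrite !rsum_sub.
have e1 : \rsum_(a : A) \rsum_(b : B) (q a b * ln (margA q a)) = \rsum_(a : A) phi (\rsum_(b : B) q a b).
  by apply: eq_bigr => a _; rewrite -rsum_scale_r.
have e2 : \rsum_(a : A) \rsum_(b : B) (q a b * ln (margB q b)) = \rsum_(b : B) phi (\rsum_(a : A) q a b).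
  by rewrite exchange_big; apply: eq_bigr => b _; rewrite -rsum_scale_r.
rewrite e1 e2 /K h1 /phi ln_1; ring.
Qed.

Definition qc (Y T : finType) (p : bool -> T -> R) (W : chan Y) : T -> Y -> R :=
  fun t y => \rsum_(x : bool) p x t * W x y.

Definition LN (Z Y : finType) (V : chan Z) (W : chan Y) : Prop :=
  forall (T : finType) (p : bool -> T -> R), (forall x t, 0 <= p x t) ->
    K (qc p W) <= K (qc p V).

Lemma qc_ge0 (Y T : finType) (p : bool -> T -> R) (W : chan Y) :
  is_channel W -> (forall x t, 0 <= p x t) -> forall t y, 0 <= qc p W t y.
Proof.
move=> [hW _] hp t y; rewrite /qc; apply: rsum_ge0 => x.
apply: Rmult_le_pos; [exact: hp | exact: hW].
Qed.

Lemma qc_tot (Y T : finType) (p : bool -> T -> R) (W : chan Y) :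
  is_channel W -> forall t, \rsum_(y : Y) qc p W t y = \rsum_(x : bool) p x t.
Proof.
move=> [_ hW] t; rewrite /qc exchange_big; apply: eq_bigr => x _.
by rewrite rsum_scale hW Rmult_1_r.
Qed.

Lemma qc_tot2 (Y T : finType) (p : bool -> T -> R) (W : chan Y) :
  is_channel W -> \rsum_(t : T) \rsum_(y : Y) qc p W t y = \rsum_(x : bool) \rsum_(t : T) p x t.
Proof.
move=> hW; rewrite [RHS]exchange_big; apply: eq_bigr => t _; exact: qc_tot.
Qed.

Lemma LN_of_less_noisy (Y Z : finType) (W : chan Y) (V : chan Z) :
  is_channel W -> is_channel V -> less_noisy V W -> LN V W.
Proof.
move=> hW hV hln T p hp.
set S := \rsum_(x : bool) \rsum_(t : T) p x t.
have hS : 0 <= S by apply: rsum_ge0 => x; apply: rsum_ge0.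
case: (Rle_lt_or_eq_dec 0 S hS) => hS'.
- set p' := fun x t => / S * p x t.
  have hp' : forall x t, 0 <= p' x t.
    move=> x t; apply: Rmult_le_pos; [apply: Rlt_le; exact: Rinv_0_lt_compat | exact: hp].
  have dist : is_dist2 p'.
    split => //; rewrite /p'.
    under eq_bigr => x _ do rewrite rsum_scale.
    by rewrite rsum_scale -/S; field; lra.
  have := hln T p' dist.
  have eW : forall (Y : finType) (W : chan Y), (fun t y => \rsum_(x : bool) p' x t * W x y) = qc p' W by [].
  rewrite !eW.
  rewrite (mutinfo_K (qc_ge0 hW hp') (eq_trans (qc_tot2 p' hW) (proj2 dist))).
  rewrite (mutinfo_K (qc_ge0 hV hp') (eq_trans (qc_tot2 p' hV) (proj2 dist))).
  have sc : forall (Y : finType) (W : chan Y), qc p' W = (fun t y => / S * qc p W t y).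
    move=> Y0 W0; apply: functional_extensionality => t; apply: functional_extensionality => y.
    by rewrite /qc -rsum_scale; apply: eq_bigr => x _; rewrite /p'; ring.
  have iS : 0 < / S by apply: Rinv_0_lt_compat.
  rewrite !sc (K_scale iS (qc_ge0 hW hp)) (K_scale iS (qc_ge0 hV hp)).
  have l2 := ln2_pos.
  move=> h.
  have e : forall a, a / ln 2 * ln 2 = a by move=> a; field; lra.
  have h2 : / S * K (qc p W) <= / S * K (qc p V).
    have := Rmult_le_compat_r (ln 2) _ _ (Rlt_le _ _ l2) h.
    by rewrite !e.
  exact: (Rmult_le_reg_l _ _ _ iS h2).
- have z : forall x t, p x t = 0.
    move=> x t; have := hp x t.
    have : p x t <= S.
      apply: Rle_trans (_ : \rsum_(t : T) p x t <= S).
        exact: (@rsum_term T (p x) t (hp x)).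
      exact: (@rsum_term bool (fun x => \rsum_(t : T) p x t) x (fun x => rsum_ge0 (hp x))).
    lra.
  have zq : forall (Y : finType) (W : chan Y), qc p W = (fun t y => 0).
    move=> Y0 W0; apply: functional_extensionality => t; apply: functional_extensionality => y.
    rewrite /qc; under eq_bigr => x _ do rewrite z Rmult_0_l.
    exact: rsum0.
  rewrite !zq !K_zero; lra.
Qed.

Lemma less_noisy_of_LN (Y Z : finType) (W : chan Y) (V : chan Z) :
  is_channel W -> is_channel V -> LN V W -> less_noisy V W.
Proof.
move=> hW hV hln T p [hp h1].
have eW : forall (Y : finType) (W : chan Y), (fun t y => \rsum_(x : bool) p x t * W x y) = qc p W by [].
rewrite !eW.
rewrite (mutinfo_K (qc_ge0 hW hp) (eq_trans (qc_tot2 p hW) h1)).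
rewrite (mutinfo_K (qc_ge0 hV hp) (eq_trans (qc_tot2 p hV) h1)).
have l2 := ln2_pos.
apply: Rmult_le_compat_r; first (apply: Rlt_le; exact: Rinv_0_lt_compat).
exact: hln.
Qed.

Lemma hybrid (Y Z T B : finType) (W : chan Y) (V : chan Z) :
  is_channel W -> is_channel V -> LN V W ->
  forall r : B -> bool -> T -> R, (forall b x t, 0 <= r b x t) ->
  K (fun t (o : B * Y) => \rsum_(x : bool) r o.1 x t * W x o.2)
  <= K (fun t (o : B * Z) => \rsum_(x : bool) r o.1 x t * V x o.2).
Proof.
move=> hW hV hln r hr.
rewrite !K_chain /=.
have m : forall (Y : finType) (W : chan Y), is_channel W ->
   (fun t b => \rsum_(y : Y) \rsum_(x : bool) r b x t * W x y) = (fun t b => \rsum_(x : bool) r b x t).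
  move=> Y0 W0 hW0; apply: functional_extensionality => t; apply: functional_extensionality => b.
  exact: (qc_tot (fun x t => r b x t) hW0).
rewrite (m _ _ hW) (m _ _ hV).
apply: Rplus_le_compat_l; apply: rsum_le => b.
exact: (hln T (r b) (hr b)).
Qed.

Lemma minus_channel (Y : finType) (W : chan Y) : is_channel W -> is_channel (minus_chan W).
Proof.
move=> [h0 h1]; split.
- move=> u y; rewrite /minus_chan; apply: rsum_ge0 => u2.
  apply: Rmult_le_pos; [apply: Rmult_le_pos; [lra | exact: h0] | exact: h0].
- move=> u; rewrite /minus_chan exchange_big /=.
  have e : forall u2, \rsum_(y : Y * Y) (/ 2 * W (addb u u2) y.1 * W u2 y.2) = / 2.
    move=> u2; rewrite (rsum_prod (fun a => / 2 * W (addb u u2) a) (fun b => W u2 b)).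
    by rewrite rsum_scale !h1; ring.
  under eq_bigr => u2 _ do rewrite e.
  rewrite rsum_bool; field.
Qed.

Lemma plus_channel (Y : finType) (W : chan Y) : is_channel W -> is_channel (plus_chan W).
Proof.
move=> [h0 h1]; split.
- move=> u y; rewrite /plus_chan.
  apply: Rmult_le_pos; [apply: Rmult_le_pos; [lra | exact: h0] | exact: h0].
- move=> u; rewrite /plus_chan rsum_pair exchange_big /=.
  have e : forall u1, \rsum_(y : Y * Y) (/ 2 * W (addb u1 u) y.1 * W u y.2) = / 2.
    move=> u1; rewrite (rsum_prod (fun a => / 2 * W (addb u1 u) a) (fun b => W u b)).
    by rewrite rsum_scale !h1; ring.
  under eq_bigr => u1 _ do rewrite e.
  rewrite rsum_bool; field.
Qed.

Lemma swap_bij (A B : finType) : bijective (fun o : A * B => (o.2, o.1)).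
Proof. by exists (fun o : B * A => (o.2, o.1)); case. Qed.

Lemma LN_minus (Y Z : finType) (W : chan Y) (V : chan Z) :
  is_channel W -> is_channel V -> LN V W -> LN (minus_chan V) (minus_chan W).
Proof.
move=> hW hV hln T p hp.
have [hW0 _] := hW; have [hV0 _] := hV.
pose M := fun t (o : Y * Z) => \rsum_(u1 : bool) p u1 t * (\rsum_(u2 : bool) / 2 * W (addb u1 u2) o.1 * V u2 o.2).
pose r := fun (y1 : Y) (x : bool) (t : T) => \rsum_(u1 : bool) p u1 t * (/ 2 * W (addb u1 x) y1).
apply: (Rle_trans _ (K M)).
- have e1 : qc p (minus_chan W) = (fun t (o : Y * Y) => \rsum_(x : bool) r o.1 x t * W x o.2).
    apply: functional_extensionality => t; apply: functional_extensionality => -[y1 y2].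
    rewrite /qc /minus_chan /r ; cbv beta; rewrite !rsum_bool /=; ring.
  have e2 : M = (fun t (o : Y * Z) => \rsum_(x : bool) r o.1 x t * V x o.2).
    apply: functional_extensionality => t; apply: functional_extensionality => -[y1 y2].
    rewrite /M /r ; cbv beta; rewrite !rsum_bool /=; ring.
  rewrite e1 e2; apply: hybrid => // y x t.
  rewrite /r; apply: rsum_ge0 => u; apply: Rmult_le_pos; first exact: hp.
  apply: Rmult_le_pos; [lra | exact: hW0].
- rewrite (K_reindex (f := fun o : Z * Y => (o.2, o.1)) M (swap_bij Z Y)).
  rewrite (K_reindex (f := fun o : Z * Z => (o.2, o.1)) (qc p (minus_chan V)) (swap_bij Z Z)).
  pose r' := fun (z2 : Z) (x : bool) (t : T) => \rsum_(u2 : bool) p (addb x u2) t * (/ 2 * V u2 z2).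
  have e1 : (fun t (o : Z * Y) => M t (o.2, o.1)) = (fun t o => \rsum_(x : bool) r' o.1 x t * W x o.2).
    apply: functional_extensionality => t; apply: functional_extensionality => -[z2 y1].
    rewrite /M /r' ; cbv beta; rewrite !rsum_bool /=; ring.
  have e2 : (fun t (o : Z * Z) => qc p (minus_chan V) t (o.2, o.1)) = (fun t o => \rsum_(x : bool) r' o.1 x t * V x o.2).
    apply: functional_extensionality => t; apply: functional_extensionality => -[z2 z1].
    rewrite /qc /minus_chan /r' ; cbv beta; rewrite !rsum_bool /=; ring.
  rewrite e1 e2; apply: hybrid => // z x t.
  rewrite /r'; apply: rsum_ge0 => u; apply: Rmult_le_pos; first exact: hp.
  apply: Rmult_le_pos; [lra | exact: hV0].
Qed.

Lemma bij3 (A B C : finType) : bijective (fun o : (A * C) * B => ((o.1.1, o.2), o.1.2)).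
Proof. by exists (fun o : (A * B) * C => ((o.1.1, o.2), o.1.2)); case=> -[]. Qed.

Lemma bij3' (A B C : finType) : bijective (fun o : (B * C) * A => ((o.2, o.1.1), o.1.2)).
Proof. by exists (fun o : (A * B) * C => ((o.1.2, o.2), o.1.1)); case=> -[]. Qed.

Lemma LN_plus (Y Z : finType) (W : chan Y) (V : chan Z) :
  is_channel W -> is_channel V -> LN V W -> LN (plus_chan V) (plus_chan W).
Proof.
move=> hW hV hln T p hp.
have [hW0 _] := hW; have [hV0 _] := hV.
pose M := fun t (o : Y * Z * bool) => \rsum_(u2 : bool) p u2 t * (/ 2 * W (addb o.2 u2) o.1.1 * V u2 o.1.2).
apply: (Rle_trans _ (K M)).
- rewrite (K_reindex (f := fun o : (Y * bool) * Y => ((o.1.1, o.2), o.1.2)) (qc p (plus_chan W)) (bij3 Y Y bool)).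
  rewrite (K_reindex (f := fun o : (Y * bool) * Z => ((o.1.1, o.2), o.1.2)) M (bij3 Y Z bool)).
  pose r := fun (o : Y * bool) (x : bool) (t : T) => p x t * (/ 2 * W (addb o.2 x) o.1).
  have e1 : (fun t (o : (Y * bool) * Y) => qc p (plus_chan W) t ((o.1.1, o.2), o.1.2))
          = (fun t o => \rsum_(x : bool) r o.1 x t * W x o.2).
    apply: functional_extensionality => t; apply: functional_extensionality => -[[a u] b].
    rewrite /qc /plus_chan /r; cbv beta; rewrite !rsum_bool /=; ring.
  have e2 : (fun t (o : (Y * bool) * Z) => M t ((o.1.1, o.2), o.1.2))
          = (fun t o => \rsum_(x : bool) r o.1 x t * V x o.2).
    apply: functional_extensionality => t; apply: functional_extensionality => -[[a u] c].
    rewrite /M /r; cbv beta; rewrite !rsum_bool /=; ring.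
  rewrite e1 e2; apply: hybrid => // o x t.
  rewrite /r; apply: Rmult_le_pos; first exact: hp.
  apply: Rmult_le_pos; [lra | exact: hW0].
- rewrite (K_reindex (f := fun o : (Z * bool) * Y => ((o.2, o.1.1), o.1.2)) M (bij3' Y Z bool)).
  rewrite (K_reindex (f := fun o : (Z * bool) * Z => ((o.2, o.1.1), o.1.2)) (qc p (plus_chan V)) (bij3' Z Z bool)).
  pose r := fun (o : Z * bool) (x : bool) (t : T) => p (addb o.2 x) t * (/ 2 * V (addb o.2 x) o.1).
  have e1 : (fun t (o : (Z * bool) * Y) => M t ((o.2, o.1.1), o.1.2))
          = (fun t o => \rsum_(x : bool) r o.1 x t * W x o.2).
    apply: functional_extensionality => t; apply: functional_extensionality => -[[c u] a].
    rewrite /M /r; cbv beta; rewrite !rsum_bool /=; case: u => /=; ring.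
  have e2 : (fun t (o : (Z * bool) * Z) => qc p (plus_chan V) t ((o.2, o.1.1), o.1.2))
          = (fun t o => \rsum_(x : bool) r o.1 x t * V x o.2).
    apply: functional_extensionality => t; apply: functional_extensionality => -[[c u] a].
    rewrite /qc /plus_chan /r; cbv beta; rewrite !rsum_bool /=; case: u => /=; ring.
  rewrite e1 e2; apply: hybrid => // o x t.
  rewrite /r; apply: Rmult_le_pos; first exact: hp.
  apply: Rmult_le_pos; [lra | exact: hV0].
Qed.

Lemma polar_LN (s : seq bool) : forall (Y Z : finType) (W : chan Y) (V : chan Z),
  is_channel W -> is_channel V -> LN V W ->
  [/\ LN (polar s V) (polar s W), is_channel (polar s W) & is_channel (polar s V)].
Proof.
elim: s => [|b s IH] Y Z W V hW hV hln /=; first by [].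
case: b => /=.
- apply: IH; [exact: plus_channel | exact: plus_channel | exact: LN_plus].
- apply: IH; [exact: minus_channel | exact: minus_channel | exact: LN_minus].
Qed.

Theorem mainTheorem9 (Y Z : finType) (W : chan Y) (V : chan Z) :
  is_channel W -> is_channel V -> less_noisy V W ->
  forall s : seq bool, s <> [::] ->
    less_noisy (polar s V) (polar s W) /\
    symcap (polar s W) <= symcap (polar s V).
Proof.
move=> hW hV hln s _.
have [h1 h2 h3] := polar_LN s hW hV (LN_of_less_noisy hW hV hln).
have hl := less_noisy_of_LN h2 h3 h1.
split => //.
pose p := fun (x t : bool) => if x == t then / 2 else 0.
have hp : is_dist2 p.
  split.
  - by move=> x t; rewrite /p; case: (x == t); lra.
  - rewrite /p !rsum_bool /=; field.
have e : forall (O : finType) (U : chan O), (fun x y => / 2 * U x y) = (fun t y => \rsum_(x : bool) p x t * U x y).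
  move=> O U; apply: functional_extensionality => t; apply: functional_extensionality => y.
  rewrite rsum_bool /p; case: t => /=; ring.
rewrite /symcap !e.
exact: hl.
Qed.
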